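(* (1) For any poset $P$ and any subset $P_0\subseteq P$ (with the induced order), no isotone map $P_0\to\mathrm{Down}(P)$ is surjective. (2) More strongly, for any poset $P_0$ and any upper semilattice $T$ containing $\mathrm{Down}(P_0)$ as an upper subsemilattice, there is no isotone map $f:P_0\to T$ such that $f(P_0)$ generates $T$ as an upper semilattice.
   Context: For a poset $P$, a downset of $P$ is a subset $d$ with $x\le y\in d\Rightarrow x\in d$. $\mathrm{Down}(P)$ denotes the lattice of all downsets of $P$ (including $\emptyset$), ordered by inclusion, with join given by union. A map of posets is isotone if it preserves $\le$. *)

(* Defs.v *)
From HB Require Import structures.
From mathcomp Require Import all_boot all_order.
Set Implicit Arguments. Unset Strict Implicit. Unset Printing Implicit Defensive.
Import Order.TTheory.
Local Open Scope order_scope.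

Definition downset (disp : Order.disp_t) (P : porderType disp) (D : P -> Prop) : Prop :=
  forall x y : P, x <= y -> D y -> D x.

Definition setU_ (A : Type) (X Y : A -> Prop) : A -> Prop := fun a => X a \/ Y a.
Definition subset_ (A : Type) (X Y : A -> Prop) : Prop := forall a, X a -> Y a.

Inductive gen_join (disp : Order.disp_t) (T : joinSemilatticeType disp) (S : T -> Prop)
  : T -> Prop :=
  | gen_join_base : forall t, S t -> gen_join S t
  | gen_join_join : forall t u, gen_join S t -> gen_join S u -> gen_join S (t `|` u).

(* Main.v *)
Require Import Defs.
From HB Require Import structures.
From mathcomp Require Import all_boot all_order.
From Stdlib Require Import Classical ClassicalEpsilon FunctionalExtensionality PropExtensionality.
From Stdlib Require List.
From Stdlib Require Import Lia.
Local Open Scope order_scope.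
Import Order.TTheory.

Lemma part1 (disp : Order.disp_t) (P : porderType disp) (P0 : P -> Prop)
          (f : P -> (P -> Prop)) :
      (forall x, P0 x -> downset (f x)) ->
      (forall x y, P0 x -> P0 y -> x <= y -> subset_ (f x) (f y)) ->
      ~ (forall D : P -> Prop, downset D -> exists2 x, P0 x & f x = D).
Proof.
move=> _ fmono surj.
pose D := fun y : P => exists x, P0 x /\ y <= x /\ ~ f x x.
have dD : downset D.
  move=> y z yz [x [Px [zx nx]]]; exists x; split=> //; split=> //.
  exact: le_trans yz zx.
have [a Pa fa] := surj D dD.
have Hin : forall y, f a y <-> D y by move=> y; rewrite fa.
case: (classic (f a a)) => faa.
- have [x [Px [ax nx]]] := proj1 (Hin a) faa.
  apply: (nx). apply: (fmono a x Pa Px ax).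
  apply/(proj2 (Hin x)). exists x; split=> //; split=> //.
- apply: (faa); apply: (proj2 (Hin a)); exists a; split=> //; split=> //.
Qed.

Section Part2.
Variables (disp0 : Order.disp_t) (P0 : porderType disp0)
          (dispT : Order.disp_t) (T : joinSemilatticeType dispT)
          (e : (P0 -> Prop) -> T).
Hypothesis einj : forall D D', downset D -> downset D' -> e D = e D' -> D = D'.
Hypothesis ejoin : forall D D', downset D -> downset D' -> e (setU_ D D') = e D `|` e D'.
Variable f : P0 -> T.
Hypothesis fmono : forall x y, x <= y -> f x <= f y.

Lemma downsetU (D D' : P0 -> Prop) : downset D -> downset D' -> downset (setU_ D D').
Proof. by move=> dD dD' x y xy [H|H]; [left; apply: dD xy H | right; apply: dD' xy H]. Qed.

Lemma emono (D D' : P0 -> Prop) : downset D -> downset D' -> subset_ D D' -> e D <= e D'.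
Proof.
move=> dD dD' sub.
have -> : D' = setU_ D D'.
  apply: functional_extensionality => y; apply: propositional_extensionality.
  by split; [right | case=> //; apply: sub].
rewrite ejoin //. exact: leUl.
Qed.

Lemma erefl_ (D D' : P0 -> Prop) : downset D -> downset D' -> e D <= e D' -> subset_ D D'.
Proof.
move=> dD dD' le y Dy.
have E : setU_ D D' = D'.
  apply: einj => //; first exact: downsetU.
  by rewrite ejoin // join_r.
by rewrite -E; left.
Qed.

Definition Ind : P0 -> Prop := fun y => forall S : P0 -> Prop, downset S ->
  (forall z, f z <= e S -> S z) -> S y.

Lemma Ind_down : downset Ind.
Proof. move=> x y xy Iy S dS cS. exact: dS xy (Iy S dS cS). Qed.

Lemma Ind_closed (y : P0) : f y <= e Ind -> Ind y.
Proof.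
move=> le S dS cS; apply: (cS); apply: le_trans le _.
apply: (emono _ _ Ind_down dS) => z Iz; exact: Iz S dS cS.
Qed.

Definition eq_dec_cl : forall a b : P0, {a = b} + {a <> b} :=
  fun a b => excluded_middle_informative (a = b).

Lemma keyL : forall n (H : list P0), (length H <= n)%coq_nat ->
  (forall x, List.In x H -> Ind x) -> H <> nil ->
  forall B : P0 -> Prop, downset B -> subset_ B Ind -> (forall x, List.In x H -> ~ B x) ->
  exists C, downset C /\ subset_ B C /\ (forall x, List.In x H -> f x <= e C)
    /\ exists x, List.In x H /\ ~ C x.
Proof.
elim=> [|n IH] H Hlen HInd Hne B dB sBI disj.
  by case: H Hlen Hne HInd disj => //= a l Hl; inversion Hl.
pose E := fun y => B y \/ (Ind y /\ ~ (exists x, List.In x H /\ x <= y)).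
have dE : downset E.
  move=> y z yz [Bz|[Iz nz]]; [left; exact: dB yz Bz|right; split].
  - exact: Ind_down yz Iz.
  - move=> [x [xH xy]]; apply: nz; exists x; split=> //; exact: le_trans xy yz.
have sEI : subset_ E Ind by move=> y [By|[Iy _]]; [apply: sBI|].
have disjE : forall x, List.In x H -> ~ E x.
  move=> x xH [Bx|[_ nx]]; [exact: disj xH Bx|apply: nx; exists x; split=> //].
have [z [fz nEz]] : exists z, f z <= e E /\ ~ E z.
  apply: NNPP => Hn.
  have [x0 x0H] : exists x0, List.In x0 H.
    destruct H as [|x0 l]; [by [] | by exists x0; left].
  apply: (disjE x0 x0H).
  apply: (HInd x0 x0H) => // w fw.
  apply: NNPP => nEw; apply: Hn; exists w; split=> //.
have Iz : Ind z.
  apply: Ind_closed; apply: le_trans fz _; apply: emono => //; exact: Ind_down.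
have [x [xH xz]] : exists x, List.In x H /\ x <= z.
  apply: NNPP => nx; apply: nEz; right; split=> //.
have fxE : f x <= e E by exact: le_trans (fmono _ _ xz) fz.
pose H' := List.remove eq_dec_cl x H.
have inH' : forall y, List.In y H -> y <> x -> List.In y H'.
  by move=> y yH yx; apply: List.in_in_remove.
have H'in : forall y, List.In y H' -> List.In y H.
  move=> y yH; exact: proj1 (List.in_remove eq_dec_cl H y x yH).
case EH' : H' => [|a l].
  exists E; split=> //; split; first by move=> y By; left.
  split; last by exists x; split=> //; apply: disjE.
  move=> y yH; case: (classic (y = x)) => [->//|yx].
  by have := inH' y yH yx; rewrite EH'.
have lenH' : (length H' <= n)%coq_nat.
  have := List.remove_length_lt eq_dec_cl H x xH; rewrite -/H'.
  move=> lt; lia.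
have [C [dC [sEC [fC [w [wH' nCw]]]]]] :=
  IH H' lenH' (fun y yH => HInd y (H'in y yH)) (ltac:(by rewrite EH')) E dE sEI
     (fun y yH => disjE y (H'in y yH)).
exists C; split=> //; split; first by move=> y By; apply: sEC; left.
split; last by exists w; split=> //; apply: H'in.
move=> y yH; case: (classic (y = x)) => [->|yx]; last exact: fC (inH' y yH yx).
apply: le_trans fxE _; exact: emono.
Qed.

Lemma gen_list t : gen_join (fun u => exists x, f x = u) t ->
  exists l : list P0, l <> nil /\ (forall x, List.In x l -> f x <= t) /\
    (forall u, (forall x, List.In x l -> f x <= u) -> t <= u).
Proof.
elim=> [u [x <-]|u v _ [l1 [n1 [a1 b1]]] _ [l2 [n2 [a2 b2]]]].
  exists (x :: nil); split=> //; split.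
    by move=> y [<-|[]].
  by move=> w H; apply: H; left.
exists (l1 ++ l2); split; first by case: l1 n1 {a1 b1}.
split.
  move=> x xl; case: (List.in_app_or l1 l2 x xl) => H.
    by apply: le_trans (a1 x H) _; apply: leUl.
  by apply: le_trans (a2 x H) _; apply: leUr.
move=> w H; rewrite leUx; apply/andP; split.
  by apply: b1 => x xl; apply: H; apply: List.in_or_app; left.
by apply: b2 => x xl; apply: H; apply: List.in_or_app; right.
Qed.

Lemma part2 : ~ (forall t : T, gen_join (fun u => exists x, f x = u) t).
Proof.
move=> Hg.
have [l [ln [la lb]]] := gen_list _ (Hg (e Ind)).
have lI : forall x, List.In x l -> Ind x by move=> x xl; apply: Ind_closed; apply: la.
have [C [dC [_ [fC [x [xl nCx]]]]]] :=
  keyL _ _ (le_n (length l)) lI ln (fun _ => False) (fun _ _ _ H => H) (fun _ H => False_ind _ H)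
    (fun _ _ H => H).
apply: nCx; apply: (erefl_ _ _ Ind_down dC (lb _ fC)); exact: lI.
Qed.
End Part2.

Theorem corollary3p2 :
  (* (1) no isotone surjection P0 -> Down(P), for P0 a subset of P with the induced order *)
  (forall (disp : Order.disp_t) (P : porderType disp) (P0 : P -> Prop)
          (f : P -> (P -> Prop)),
      (forall x, P0 x -> downset (f x)) ->
      (forall x y, P0 x -> P0 y -> x <= y -> subset_ (f x) (f y)) ->
      ~ (forall D : P -> Prop, downset D -> exists2 x, P0 x & f x = D))
  /\
  (* (2) Down(P0) embedded in T as an upper subsemilattice via e;
         no isotone f : P0 -> T whose image generates T as an upper semilattice *)
  (forall (disp0 : Order.disp_t) (P0 : porderType disp0)
          (dispT : Order.disp_t) (T : joinSemilatticeType dispT)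
          (e : (P0 -> Prop) -> T),
      (forall D D', downset D -> downset D' -> e D = e D' -> D = D') ->
      (forall D D', downset D -> downset D' -> e (setU_ D D') = e D `|` e D') ->
      forall f : P0 -> T,
        (forall x y, x <= y -> f x <= f y) ->
        ~ (forall t : T, gen_join (fun u => exists x, f x = u) t)).
Proof.
split; first exact: part1.
move=> disp0 P0 dispT T e einj ejoin f fmono.
exact: (@part2 disp0 P0 dispT T e einj ejoin f fmono).
Qed.
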